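(* Let $T>0$, let $H(t,p)\in C^1([0,T]\times\mathbb{R}^n)$ and let $\sigma\in C^1(\mathbb{R}^n)$ be convex and Lipschitz. Suppose that for some $t_1\in(0,T)$ the function $\omega(x)=u(t_1,x)=\big(\sigma^*+\int_0^{t_1}H(\tau,\cdot)d\tau\big)^*(x)$ is of class $C^1(\mathbb{R}^n)$. Then: (1) every characteristic curve $\mathcal C:\ x=x(t,z)=z+\int_{t_1}^tH_p(\tau,D\omega(z))\,d\tau$, $t\in[t_1,T]$, of problem $(H,\omega)$ can be extended backward to a characteristic curve of problem $(H,\sigma)$ on $[0,T]$ starting at $(0,y)$, where $y=z-\int_0^{t_1}H_p(\tau,D\omega(z))\,d\tau$; that is, the curve $x(t)=z+\int_{t_1}^tH_p(\tau,D\omega(z))d\tau$, $t\in[0,T]$, is the characteristic curve of $(H,\sigma)$ emanating from $y$. (2) Conversely, if $\mathcal C':\ x=x(t,y)=y+\int_0^tH_p(\tau,D\sigma(y))\,d\tau$, $t\in[0,T]$, is a characteristic curve of problem $(H,\sigma)$ which is of type (I) at the point $(t_1,x_1)$, $x_1=x(t_1,y)$, then the restriction of $\mathcal C'$ to $[t_1,T]$ is a characteristic curve of problem $(H,\omega)$ on $[t_1,T]\times\mathbb{R}^n$, namely it equals $x=x_1+\int_{t_1}^tH_p(\tau,D\omega(x_1))d\tau$, $t\in[t_1,T]$.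
   Context: $f^*(y)=\sup_q\{\langle y,q\rangle-f(q)\}$ denotes the Fenchel conjugate; $D\sigma$, $D\omega$ denote gradients and $H_p$ the gradient of $H$ in $p$. Problem $(H,\sigma)$ is the Cauchy problem $u_t+H(t,D_xu)=0$ on $(0,T)\times\mathbb{R}^n$, $u(0,x)=\sigma(x)$; its characteristic curve emanating from $y\in\mathbb{R}^n$ is $x(t,y)=y+\int_0^tH_p(\tau,D\sigma(y))d\tau$, $t\in[0,T]$ (the $x$-component of the solution of $\dot x=H_p$, $\dot v=\langle H_p,p\rangle-H$, $\dot p=0$, $x(0)=y$, $v(0)=\sigma(y)$, $p(0)=D\sigma(y)$). Problem $(H,\omega)$ is the Cauchy problem $u_t+H(t,D_xu)=0$ on $(t_1,T)\times\mathbb{R}^n$, $u(t_1,x)=\omega(x)$; its characteristic curve emanating from $z$ is $x(t,z)=z+\int_{t_1}^tH_p(\tau,D\omega(z))d\tau$, $t\in[t_1,T]$. For $(t,x)$, $\ell(t,x)$ is the set of maximizers $p\in\mathbb{R}^n$ of $q\mapsto\langle x,q\rangle-\sigma^*(q)-\int_0^tH(\tau,q)d\tau$. A characteristic curve of $(H,\sigma)$ emanating from $y$ and passing through $(t_0,x_0)$ is of type (I) at $(t_0,x_0)$ if $D\sigma(y)\in\ell(t_0,x_0)$. *)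

(* Defs.v *)
From HB Require Import structures.
From mathcomp Require Import all_boot all_order all_algebra.
From mathcomp Require Import all_classical all_reals all_analysis.
Set Implicit Arguments. Unset Strict Implicit. Unset Printing Implicit Defensive.
Import Order.TTheory GRing.Theory Num.Theory.
Import numFieldNormedType.Exports.
Local Open Scope classical_set_scope.
Local Open Scope ring_scope.

Section Defs.
Variables (R : realType) (n : nat).
Notation V := 'rV[R]_n.

Definition dotv (u v : V) : R := \sum_(i < n) u 0 i * v 0 i.

Definition oint (a b : R) (f : R -> R) : R :=
  if a <= b then Rintegral lebesgue_measure `[a, b] f
  else - Rintegral lebesgue_measure `[b, a] f.

Definition voint (a b : R) (F : R -> V) : V :=
  \row_(i < n) oint a b (fun t => F t 0 i).

Definition fconj (f : V -> \bar R) (y : V) : \bar R :=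
  ereal_sup [set ((dotv y q)%:E - f q)%E | q in [set: V]].

Definition is_gradient (f : V -> R) (x g : V) : Prop :=
  differentiable f x /\ forall h : V, 'd f x h = dotv g h.

Definition C1_grad (f : V -> R) (Df : V -> V) : Prop :=
  (forall x, is_gradient f x (Df x)) /\ continuous Df.

Definition convex_fun (f : V -> R) : Prop :=
  forall (x y : V) (l : R), 0 <= l <= 1 ->
    f (l *: x + (1 - l) *: y) <= l * f x + (1 - l) * f y.

Definition lipschitz_fun (f : V -> R) : Prop :=
  exists L : R, forall x y : V, `|f x - f y| <= L * `|x - y|.

Definition strip (T : R) : set (R * V) := [set tp | 0 <= tp.1 <= T].

(* H is C^1 on [0,T] x R^n (one-sided in t at t = 0, T), with partial
   gradient in p equal to Hp: there is a partial t-derivative Ht such that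
   Ht and Hp are continuous on the strip and (Ht, Hp) is the joint
   (Frechet) derivative of H at every point of the strip, within the strip. *)
Definition C1_strip (T : R) (H : R -> V -> R) (Hp : R -> V -> V) : Prop :=
  exists Ht : R -> V -> R,
    {within strip T, continuous (fun tp : R * V => Ht tp.1 tp.2)} /\
    {within strip T, continuous (fun tp : R * V => Hp tp.1 tp.2)} /\
    forall t p, 0 <= t <= T -> forall eps : R, 0 < eps ->
      exists2 delta : R, 0 < delta &
        forall (s : R) (h : V), 0 <= t + s <= T -> `|s| < delta -> `|h| < delta ->
          `|H (t + s) (p + h) - H t p - s * Ht t p - dotv (Hp t p) h|
            <= eps * (`|s| + `|h|).

Definition hopf (sigma : V -> R) (H : R -> V -> R) (t : R) : V -> \bar R :=
  fconj (fun q => (fconj (fun p => (sigma p)%:E) q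
                   + (oint 0 t (fun tau => H tau q))%:E)%E).

Definition ell (sigma : V -> R) (H : R -> V -> R) (t : R) (x : V) : set V :=
  let F := fun q => ((dotv x q)%:E - fconj (fun p => (sigma p)%:E) q
                      - (oint 0 t (fun tau => H tau q))%:E)%E in
  [set p | forall q, (F q <= F p)%E].

Definition char_sigma (Hp : R -> V -> V) (Dsigma : V -> V) (y : V) (t : R) : V :=
  y + voint 0 t (fun tau => Hp tau (Dsigma y)).

Definition char_omega (Hp : R -> V -> V) (Domega : V -> V) (t1 : R) (z : V) (t : R) : V :=
  z + voint t1 t (fun tau => Hp tau (Domega z)).

End Defs.

(* Main.v *)
Require Import Defs.
From HB Require Import structures.
From mathcomp Require Import all_boot all_order all_algebra.
From mathcomp Require Import all_classical all_reals all_analysis.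
From mathcomp Require Import ring lra.
Import Order.TTheory GRing.Theory Num.Theory.
Import numFieldNormedType.Exports.
Local Open Scope classical_set_scope.
Local Open Scope ring_scope.
Set Implicit Arguments. Unset Strict Implicit. Unset Printing Implicit Defensive.
Section Basic.
Variables (R : realType) (n : nat).
Notation V := 'rV[R]_n.

Lemma dotvC (u v : V) : dotv u v = dotv v u.
Proof. by rewrite /dotv; apply: eq_bigr => i _; rewrite mulrC. Qed.

Lemma dotvDl (u v w : V) : dotv (u + v) w = dotv u w + dotv v w.
Proof. by rewrite /dotv -big_split; apply: eq_bigr => i _; rewrite mxE mulrDl. Qed.

Lemma dotvZl (a : R) (u w : V) : dotv (a *: u) w = a * dotv u w.
Proof. by rewrite /dotv mulr_sumr; apply: eq_bigr => i _; rewrite mxE mulrA. Qed.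

Lemma dotvNl (u w : V) : dotv (- u) w = - dotv u w.
Proof. by rewrite -scaleN1r dotvZl mulN1r. Qed.

Lemma dotvBl (u v w : V) : dotv (u - v) w = dotv u w - dotv v w.
Proof. by rewrite dotvDl dotvNl. Qed.

Lemma dotvDr (u v w : V) : dotv w (u + v) = dotv w u + dotv w v.
Proof. by rewrite dotvC dotvDl !(dotvC w). Qed.

Lemma dotvZr (a : R) (u w : V) : dotv w (a *: u) = a * dotv w u.
Proof. by rewrite dotvC dotvZl dotvC. Qed.

Lemma dotvBr (u v w : V) : dotv w (u - v) = dotv w u - dotv w v.
Proof. by rewrite !(dotvC w) dotvBl. Qed.

Lemma dotv0l (w : V) : dotv 0 w = 0.
Proof. by rewrite /dotv big1 // => i _; rewrite mxE mul0r. Qed.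

Definition ev (i : 'I_n) : V := \row_j (j == i)%:R.

Lemma dotv_ev (v : V) i : dotv v (ev i) = v 0 i.
Proof.
rewrite /dotv (bigD1 i) //= big1 ?addr0; first by rewrite mxE eqxx mulr1.
by move=> j /negbTE ji; rewrite mxE ji mulr0.
Qed.

Lemma dotv_ext (a b : V) : (forall v, dotv a v = dotv b v) -> a = b.
Proof.
move=> h; apply/rowP => i.
by rewrite -!dotv_ev h.
Qed.

Lemma entry_le_norm (v : V) i : `|v 0 i| <= `|v|.
Proof.
rewrite [leRHS]/Num.norm /= mx_normrE.
apply/bigmax_geP; right => /=; by exists (ord0, i).
Qed.

Lemma norm_le_entries (v : V) c : 0 <= c -> (forall i, `|v 0 i| <= c) -> `|v| <= c.
Proof.
move=> c0 h; rewrite [leLHS]/Num.norm /= mx_normrE.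
apply/bigmax_leP; split => // -[i j] _ /=; rewrite (ord1 i); exact: h.
Qed.

Lemma dotv_le (a b : V) : `|dotv a b| <= n%:R * (`|a| * `|b|).
Proof.
rewrite /dotv; apply: (le_trans (ler_norm_sum _ _ _)).
rewrite mulr_natl -[X in _ *+ X]card_ord -sumr_const.
apply: ler_sum => i _; rewrite normrM.
by apply: ler_pM => //; apply: entry_le_norm.
Qed.

End Basic.
Section NearEx.
Lemma near_ex {K : numFieldType} {W : normedModType K} (x : W) (P : W -> Prop) :
  (\forall y \near x, P y) -> exists2 e : K, 0 < e & forall y, `|x - y| < e -> P y.
Proof. by move=> /nbhs_normP [e e0 he]; exists e => // y hy; apply: he. Qed.

Lemma ex_near {K : numFieldType} {W : normedModType K} (x : W) (P : W -> Prop) (e : K) :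
  0 < e -> (forall y, `|x - y| < e -> P y) -> \forall y \near x, P y.
Proof. by move=> e0 he; apply/nbhs_normP; exists e. Qed.
End NearEx.

Section Grad.
Variables (R : realType) (n : nat).
Notation V := 'rV[R]_n.

Lemma dir_lim (f : V -> R) x g : is_gradient f x g ->
  forall v (eps : R), 0 < eps -> exists2 d : R, 0 < d &
   forall h : R, h != 0 -> `|h| < d -> `|dotv g v - h^-1 * (f (h *: v + x) - f x)| < eps.
Proof.
move=> [dfx dfE] v eps e0.
have dv : derivable f x v := diff_derivable dfx.
have hD : 'D_v f x = dotv g v by rewrite deriveE // dfE.
have := dv; rewrite /derivable => /cvg_ex [l hl].
have hl' : l = 'D_v f x by rewrite /derive (cvg_lim _ hl).
move: hl => /cvgrPdist_lt /(_ eps e0).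
rewrite /dnbhs /within /= => /near_ex [d d0 hd].
exists d => // h h0 hh.
have := hd h; rewrite sub0r normrN => /(_ hh h0).
by rewrite hl' hD.
Qed.

End Grad.
Section Grad2.
Variables (R : realType) (n : nat).
Notation V := 'rV[R]_n.

Lemma le_eps (a b : R) : (forall e, 0 < e -> a <= b + e) -> a <= b.
Proof.
move=> h; rewrite leNgt; apply/negP => ba.
have := h ((a - b) / 2); rewrite (_ : 0 < (a - b) / 2); last by lra.
by move=> /(_ isT); lra.
Qed.

Lemma eq_eps (a b : R) : (forall e, 0 < e -> `|a - b| <= e) -> a = b.
Proof.
move=> h; apply/eqP; rewrite eq_le; apply/andP; split; apply: le_eps => e e0;
  have := h e e0; rewrite ler_norml; lra.
Qed.

Lemma grad_unique (f : V -> R) x g p : is_gradient f x g ->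
  (forall w, f x + dotv p (w - x) <= f w) -> p = g.
Proof.
move=> hg hp; apply: dotv_ext => v; apply: eq_eps => e e0.
have [d d0 hd] := dir_lim hg v e0.
have key : forall h, h != 0 -> h * dotv p v <= f (h *: v + x) - f x.
  move=> h _; have := hp (h *: v + x).
  by rewrite addrK dotvZr; lra.
have h1 : d / 2 != 0 by rewrite mulf_neq0 // ?gt_eqF // invr_eq0.
have h2 : - (d / 2) != 0 by rewrite oppr_eq0.
have a1 : `|d / 2| < d by rewrite gtr0_norm ?divr_gt0 //; lra.
have a2 : `|- (d / 2)| < d by rewrite normrN.
have := hd _ h1 a1; have := hd _ h2 a2.
have k1 := key _ h1; have k2 := key _ h2.
have q1 : dotv p v <= (d / 2)^-1 * (f (d / 2 *: v + x) - f x).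
  by rewrite ler_pdivlMl ?divr_gt0.
have q2 : (- (d / 2))^-1 * (f (- (d / 2) *: v + x) - f x) <= dotv p v.
  by rewrite ler_ndivrMl // oppr_lt0 divr_gt0.
rewrite !ltr_norml ler_norml; lra.
Qed.

Lemma convex_grad (f : V -> R) y g : convex_fun f -> is_gradient f y g ->
  forall w, f y + dotv g (w - y) <= f w.
Proof.
move=> cf hg w; set v := w - y.
suff : dotv g v <= f w - f y by lra.
apply: le_eps => e e0.
have [d d0 hd] := dir_lim hg v e0.
set h := Num.min (d / 2) (1 / 2).
have hpos : 0 < h by rewrite lt_min !divr_gt0.
have hd2 : h <= d / 2 by rewrite ge_min lexx.
have h12 : h <= 1 / 2 by rewrite ge_min lexx orbT.
have hn0 : h != 0 by rewrite gt_eqF.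
have ah : `|h| < d by rewrite gtr0_norm //; lra.
have := hd _ hn0 ah.
have eqv : h *: v + y = h *: w + (1 - h) *: y.
  by rewrite /v scalerBr scalerBl scale1r addrA addrAC.
have cv := cf w y h; rewrite -eqv in cv.
have := cv; rewrite (ltW hpos) /= (_ : h <= 1) ?(le_trans h12) //; last by lra.
move=> /(_ isT) cvx.
have q : h^-1 * (f (h *: v + y) - f y) <= f w - f y.
  by rewrite ler_pdivrMl //; lra.
rewrite ltr_norml; lra.
Qed.
End Grad2.
Section Integ.
Variables (R : realType).
Notation mu := (@lebesgue_measure R).

Definition prim (f : R -> R) (x : R) := Rintegral mu `[0, x] f.

Lemma cint (T a b : R) (f : R -> R) : {within `[0, T], continuous f} ->
  0 <= a -> b <= T -> mu.-integrable `[a, b] (EFin \o f).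
Proof.
move=> cf a0 bT; apply: continuous_compact_integrable; first exact: segment_compact.
apply: continuous_subspaceW cf => x /=; rewrite !in_itv /= => /andP[ax xb].
by rewrite (le_trans a0 ax) (le_trans xb bT).
Qed.

Lemma Rint_prim (T a b : R) (f : R -> R) : {within `[0, T], continuous f} ->
  0 <= a -> a <= b -> b <= T -> Rintegral mu `[a, b] f = prim f b - prim f a.
Proof.
move=> cf a0 ab bT; rewrite /prim.
have i0b := cint cf (lexx 0) bT.
rewrite (@Rintegral_itvB _ f (BLeft 0) (BRight b) a) ?bnd_simp //.
rewrite Rintegral_itv_obnd_cbnd //.
apply: integrableS i0b => //; apply: subset_itvr; rewrite bnd_simp //.
Qed.

Lemma oint_prim (T a b : R) (f : R -> R) : {within `[0, T], continuous f} ->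
  0 <= a <= T -> 0 <= b <= T -> oint a b f = prim f b - prim f a.
Proof.
move=> cf /andP[a0 aT] /andP[b0 bT]; rewrite /oint; case: ifPn => ab.
  exact: Rint_prim cf a0 ab bT.
rewrite -ltNge in ab; rewrite (Rint_prim cf b0 (ltW ab) aT); lra.
Qed.

End Integ.
Section Cont.
Variables (R : realType) (n : nat).
Notation V := 'rV[R]_n.

Lemma within_cont_eps (A : set R) (W : normedModType R) (f : R -> W) :
  (forall x, A x -> forall e, 0 < e -> exists2 d, 0 < d &
     forall y, A y -> `|x - y| < d -> `|f x - f y| < e) ->
  {within A, continuous f}.
Proof.
move=> h; apply/subspace_continuousP => x Ax.
apply/cvgrPdist_lt => e e0.
have [d d0 hd] := h x Ax e e0.
change (\forall y \near x, A y -> `|f x - f y| < e). apply: (ex_near d0) => y xy Ay; exact: hd.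
Qed.

Lemma strip_cont (W : normedModType R) (K : R -> V -> W) T :
  {within strip T, continuous (fun tp : R * V => K tp.1 tp.2)} ->
  forall t0 p0, 0 <= t0 <= T -> forall e, 0 < e -> exists2 d, 0 < d &
    forall t p, 0 <= t <= T -> `|t0 - t| < d -> `|p0 - p| < d ->
      `|K t0 p0 - K t p| < e.
Proof.
move=> hc t0 p0 ht0 e e0.
have hs : strip T (t0, p0) by [].
move/subspace_continuousP: hc => /(_ (t0, p0) hs) /cvgrPdist_lt /(_ e e0).
rewrite /within /= => /nbhs_ballP [d /= d0 hd].
exists d => // t p ht tt pp; apply: (hd (t, p)) => //.
by split; rewrite -ball_normE.
Qed.

End Cont.
Section Unif.
Variables (R : realType) (n : nat).
Notation V := 'rV[R]_n.

Lemma unif_p (W : normedModType R) (K : R -> V -> W) (T : R) (p0 : V) :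
  (forall t0, 0 <= t0 <= T -> forall e, 0 < e -> exists2 d, 0 < d &
     forall t p, 0 <= t <= T -> `|t0 - t| < d -> `|p0 - p| < d ->
       `|K t0 p0 - K t p| < e) ->
  forall e, 0 < e -> exists2 d, 0 < d &
     forall t p, 0 <= t <= T -> `|p0 - p| < d -> `|K t p0 - K t p| < e.
Proof.
move=> hK e e0.
have cK : compact `[0, T] by apply: segment_compact.
move/compact_near_coveringP/near_covering_withinP: cK => cov.
set P := fun (r : R) (t : R) => forall p, `|p0 - p| < `|r| -> `|K t p0 - K t p| < e.
have hn : \forall r \near (0 : R), `[0, T] `<=` P r.
  apply: (cov R (nbhs (0 : R)) P) => t0; rewrite /= in_itv /= => ht0.
  have e2 : 0 < e / 2 by rewrite divr_gt0.
  have [d d0 hd] := hK t0 ht0 _ e2.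
  exists ([set t | `|t0 - t| < d], [set r | `|0 - r| < d]).
    split => /=; first by apply/nbhs_ballP; exists d => // t; rewrite -ball_normE.
    rewrite nbhs_filterE; apply/nbhs_ballP; rewrite /nbhs_ball /nbhs_ball_ /filter_from /mkset. exists d; first exact d0. by move=> t; rewrite -ball_normE.
  move=> [t r] /= [tt rr]; rewrite in_itv /= => ht p pp.
  rewrite sub0r normrN in rr.
  have h1 : `|K t0 p0 - K t p0| < e / 2 by apply: hd => //; rewrite subrr normr0.
  have h2 := hd t p ht tt (lt_trans pp rr).
  have := ler_distD (K t0 p0) (K t p0) (K t p).
  rewrite (distrC (K t0 p0) (K t p0)) in h1 *; lra.
move: hn => /nbhs_ballP [d /= d0 hd]; exists (d / 2); first by rewrite divr_gt0.
  move=> t p ht pp.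
  have hd2 : ball (0 : R) d (d / 2).
    by rewrite -ball_normE /= sub0r normrN gtr0_norm ?divr_gt0 //; lra.
  apply: (hd _ hd2 t); first by rewrite /= in_itv.
  by rewrite gtr0_norm ?divr_gt0.
Qed.

End Unif.
Lemma tri (K : numDomainType) (W : normedZmodType K) (a b : W) : `|a| <= `|a - b| + `|b|.
Proof. by rewrite -{1}(subrK b a) ler_normD. Qed.

Section C1.
Variables (R : realType) (n : nat).
Notation V := 'rV[R]_n.
Variables (T : R) (H : R -> V -> R) (Hp : R -> V -> V).
Hypothesis hC1 : C1_strip T H Hp.

Lemma H_cont t0 p0 : 0 <= t0 <= T -> forall e, 0 < e -> exists2 d, 0 < d &
  forall t p, 0 <= t <= T -> `|t0 - t| < d -> `|p0 - p| < d -> `|H t0 p0 - H t p| < e.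
Proof.
move=> ht0 e e0; case: hC1 => Ht [_ [_ est]].
have [dl dl0 hdl] := est t0 p0 ht0 1 ltr01.
set C := `|Ht t0 p0| + n%:R * `|Hp t0 p0| + 2.
have C0 : 0 < C by rewrite /C; apply: ltr_wpDl => //; apply: addr_ge0.
exists (Num.min dl (e / C)); first by rewrite lt_min dl0 divr_gt0.
move=> t p ht; rewrite !lt_min => /andP[tdl tC] /andP[pdl pC].
have hs : 0 <= t0 + (t - t0) <= T by rewrite [t0 + _]addrC subrK.
have := hdl (t - t0) (p - p0) hs.
rewrite distrC in tdl tC; rewrite distrC in pdl pC.
move=> /(_ tdl pdl); rewrite [t0 + _]addrC subrK [p0 + _]addrC subrK mul1r => hb.
have h1 := dotv_le (Hp t0 p0) (p - p0).
have h2 : `|(t - t0) * Ht t0 p0| = `|t - t0| * `|Ht t0 p0| by rewrite normrM.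
have hC : e / C * C = e by rewrite divfK // gt_eqF.
have a1 : `|t - t0| * `|Ht t0 p0| <= e / C * `|Ht t0 p0| by rewrite ler_wpM2r // ltW.
have a2 : n%:R * (`|Hp t0 p0| * `|p - p0|) <= n%:R * (`|Hp t0 p0| * (e / C)).
  by rewrite ler_wpM2l // ler_wpM2l // ltW.
have := tri (H t p - H t0 p0 - (t - t0) * Ht t0 p0) (dotv (Hp t0 p0) (p - p0)).
have := tri (H t p - H t0 p0) ((t - t0) * Ht t0 p0).
rewrite distrC /C in hC *.
move: hC; rewrite !mulrDr; lra.
Qed.

Lemma Hp_cont t0 p0 : 0 <= t0 <= T -> forall e, 0 < e -> exists2 d, 0 < d &
  forall t p, 0 <= t <= T -> `|t0 - t| < d -> `|p0 - p| < d -> `|Hp t0 p0 - Hp t p| < e.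
Proof. by case: hC1 => Ht [_ [cHp _]]; apply: strip_cont. Qed.

Lemma Hp_tcont p i : {within `[0, T], continuous (fun t => Hp t p 0 i)}.
Proof.
apply: within_cont_eps => x; rewrite /= in_itv /= => hx e e0.
have [d d0 hd] := Hp_cont p hx e0.
exists d => // y; rewrite /= in_itv /= => hy xy.
apply: le_lt_trans (hd y p hy xy _); last by rewrite subrr normr0.
by rewrite -[X in _ <= X]/(`|_|) (le_trans _ (entry_le_norm _ i)) // !mxE.
Qed.

Lemma H_tcont q : {within `[0, T], continuous (fun t => H t q)}.
Proof.
apply: within_cont_eps => x; rewrite /= in_itv /= => hx e e0.
have [d d0 hd] := H_cont q hx e0.
exists d => // y; rewrite /= in_itv /= => hy xy.
by apply: hd => //; rewrite subrr normr0.
Qed.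

End C1.
Section Conj.
Variables (R : realType) (n : nat).
Notation V := 'rV[R]_n.
Variable sigma : V -> R.
Local Notation S := (fconj (fun p => (sigma p)%:E)).

Lemma S_ge q w : ((dotv q w - sigma w)%:E <= S q)%E.
Proof. by apply: ereal_sup_ubound; exists w => //; rewrite EFinB. Qed.

Lemma S_le q c : (forall w, dotv q w - sigma w <= c) -> (S q <= c%:E)%E.
Proof. by move=> h; apply: ge_ereal_sup => _ [w _ <-]; rewrite -EFinB lee_fin. Qed.

Lemma S_fin q : (S q < +oo)%E -> exists s, S q = s%:E.
Proof.
case Es : (S q) => [s| |] // _; first by exists s.
by have := S_ge q 0; rewrite Es.
Qed.

Variables (H : R -> V -> R) (t1 : R).
Local Notation G q := (oint 0 t1 (fun tau => H tau q)).

Lemma hopfE x : hopf sigma H t1 x =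
  ereal_sup [set ((dotv x q)%:E - S q - (G q)%:E)%E | q in [set: V]].
Proof.
rewrite /hopf /fconj; congr ereal_sup; congr image; apply/funext => q.
by rewrite (addeC (S q)) oppeD // addeA addeAC.
Qed.

End Conj.
Section Ell.
Variables (R : realType) (n : nat).
Notation V := 'rV[R]_n.
Variable sigma : V -> R.
Local Notation S := (fconj (fun p => (sigma p)%:E)).
Variables (H : R -> V -> R) (t1 : R) (omega : V -> R).
Local Notation G q := (oint 0 t1 (fun tau => H tau q)).
Hypothesis hom : forall x, hopf sigma H t1 x = (omega x)%:E.

Lemma hopf_ge x q : ((dotv x q)%:E - S q - (G q)%:E <= (omega x)%:E)%E.
Proof. by rewrite -hom hopfE; apply: ereal_sup_ubound; exists q. Qed.

Lemma ell_subgrad x p : ell sigma H t1 x p ->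
  exists sp, S p = sp%:E /\ omega x = dotv x p - sp - G p /\
     forall w, omega x + dotv p (w - x) <= omega w.
Proof.
rewrite /ell /= => hp.
have eq1 : (omega x)%:E = ((dotv x p)%:E - S p - (G p)%:E)%E.
  rewrite -hom hopfE; apply/le_anti/andP; split.
    by apply: ge_ereal_sup => _ [q _ <-]; exact: hp.
  by apply: ereal_sup_ubound; exists p.
case Es : (S p) => [sp| |]; rewrite Es in eq1 => //.
exists sp; split => //.
have e2 : omega x = dotv x p - sp - G p by move: eq1; rewrite -!EFinB => -[].
split => // w.
have := hopf_ge w p; rewrite Es -!EFinB lee_fin.
rewrite dotvBr !(dotvC p); lra.
Qed.

End Ell.
Lemma voint_chasles (R : realType) (n : nat) (F : R -> 'rV[R]_n) (T a b c : R) :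
  (forall i, {within `[0, T], continuous (fun t => F t 0 i)}) ->
  0 <= a <= T -> 0 <= b <= T -> 0 <= c <= T ->
  voint a c F = voint a b F + voint b c F.
Proof.
move=> hF ha hb hc; apply/rowP => i; rewrite !mxE.
by rewrite !(oint_prim (hF i)) // [RHS]addrC addrA subrK.
Qed.

Lemma part2 (R : realType) (n : nat) (T t1 : R)
  (H : R -> 'rV[R]_n -> R) (Hp : R -> 'rV[R]_n -> 'rV[R]_n)
  (sigma : 'rV[R]_n -> R) (Dsigma : 'rV[R]_n -> 'rV[R]_n)
  (omega : 'rV[R]_n -> R) (Domega : 'rV[R]_n -> 'rV[R]_n) :
  C1_strip T H Hp -> 0 < t1 < T ->
  (forall x, hopf sigma H t1 x = (omega x)%:E) ->
  C1_grad omega Domega ->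
  (forall y : 'rV[R]_n,
     let x1 := char_sigma Hp Dsigma y t1 in
     ell sigma H t1 x1 (Dsigma y) ->
     forall t, t1 <= t <= T ->
       char_sigma Hp Dsigma y t = char_omega Hp Domega t1 x1 t).
Proof.
move=> hC1 /andP[t10 t1T] hom [gom _] y x1 hell t /andP[t1t tT].
have [sp [_ [_ sg]]] := ell_subgrad hom hell.
have eqD := grad_unique (gom x1) sg.
rewrite /char_omega -eqD /x1 /char_sigma -addrA; congr (_ + _).
apply: (voint_chasles (T := T)) => //.
- by move=> i; apply: (Hp_tcont hC1).
- by rewrite lexx (ltW (lt_trans t10 t1T)).
- by rewrite (ltW t10) (ltW t1T).
- by rewrite tT (le_trans (ltW t10) t1t).
Qed.
Section Deriv.
Variables (R : realType).

Lemma deriv_from_eps (phi : R -> R) (r D : R) :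
  (forall e, 0 < e -> exists2 d, 0 < d & forall u, `|u| < d ->
     `|phi (r + u) - phi r - u * D| <= e * `|u|) -> is_derive r 1 phi D.
Proof.
move=> h.
have hc : (fun u : R => u^-1 *: ((phi \o shift r) (u *: 1) - phi r)) @ 0^' --> D.
  apply/cvgrPdist_lt => e e0.
  have e2 : 0 < e / 2 by rewrite divr_gt0.
  have [d d0 hd] := h _ e2.
  rewrite /dnbhs /within /=; apply/nbhs_ballP; rewrite /nbhs_ball /nbhs_ball_ /filter_from /mkset.
  exists d; first exact d0.
  move=> u; rewrite -ball_normE /= sub0r normrN => ud u0.
  have := hd u ud.
  rewrite (_ : u%:A = u); last by rewrite /GRing.scale /= mulr1.
  rewrite (addrC u r) -[u^-1 *: _]/(u^-1 * _).
  have un : 0 < `|u| by rewrite normr_gt0.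
  have -> : D - u^-1 * (phi (r + u) - phi r) = - (u^-1 * (phi (r + u) - phi r - u * D)).
    by rewrite [in RHS]mulrBr [in RHS]mulrA mulVf // mul1r opprB.
  rewrite normrN normrM normrV ?unitfE //.
  move=> hh.
  have : `|u|^-1 * `|phi (r + u) - phi r - u * D| <= `|u|^-1 * (e / 2 * `|u|).
    by rewrite ler_pM2l // invr_gt0.
  rewrite mulrCA mulVf ?gt_eqF // mulr1; lra.
split; first exact: cvgP hc.
exact: cvg_lim hc.
Qed.

End Deriv.
Section MVTsec.
Variables (R : realType) (n : nat).
Notation V := 'rV[R]_n.
Variables (T : R) (H : R -> V -> R) (Hp : R -> V -> V).
Hypothesis hC1 : C1_strip T H Hp.

Lemma phi_deriv (tau : R) (q d : V) : 0 <= tau <= T -> forall r : R,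
  is_derive r (1 : R) (fun r : R => H tau (q + r *: d)) (dotv (Hp tau (q + r *: d)) d).
Proof.
move=> ht r; apply: deriv_from_eps => e e0.
case: hC1 => Ht [_ [_ est]].
set Q := q + r *: d.
have nd : 0 < `|d| + 1 by apply: ltr_wpDl.
have [dl dl0 hdl] := est tau Q ht (e / (`|d| + 1)) (divr_gt0 e0 nd).
exists (dl / (`|d| + 1)); first by rewrite divr_gt0.
move=> u hu.
have hud : `|u *: d| < dl.
  rewrite normrZ; move: hu; rewrite ltr_pdivlMr // => hu.
  apply: le_lt_trans hu; rewrite mulrDr mulr1 lerDl; exact: normr_ge0.
have := hdl 0 (u *: d); rewrite addr0 normr0 mul0r subr0 add0r.
move=> /(_ ht dl0 hud).
rewrite (_ : q + (r + u) *: d = Q + u *: d); last by rewrite /Q scalerDl addrA.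
rewrite dotvZr normrZ => hb; apply: (le_trans hb).
rewrite (_ : e / (`|d| + 1) * (`|u| * `|d|) = e * `|u| * (`|d| / (`|d| + 1))); last first.
  by ring.
apply: ler_piMr; first by rewrite mulr_ge0 // ltW.
by rewrite ler_pdivrMr // mul1r; lra.
Qed.

Lemma mvt_pt (tau : R) (p d : V) (s : R) : 0 <= tau <= T -> 0 < s -> exists c, 0 < c < s /\
  H tau (p + s *: d) - H tau p = s * dotv (Hp tau (p + c *: d)) d.
Proof.
move=> ht s0.
have hd := phi_deriv p d ht.
have cont : {within `[0, s], continuous (fun r : R => H tau (p + r *: d))}.
  apply: derivable_within_continuous => x _; exact: ex_derive.
have [c hc eq] := @MVT R (fun r => H tau (p + r *: d))
   (fun r => dotv (Hp tau (p + r *: d)) d) 0 s s0 (fun x _ => hd x) cont.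
exists c; split; first by move: hc; rewrite in_itv.
by move: eq; rewrite scale0r addr0 subr0 mulrC.
Qed.

Lemma Gdiff_pt (p d : V) : forall e, 0 < e -> exists2 dl, 0 < dl &
  forall tau s, 0 <= tau <= T -> 0 < s < dl ->
  `|H tau (p + s *: d) - H tau p - s * dotv (Hp tau p) d| <= e * s.
Proof.
move=> e e0.
have nd : 0 < n%:R * `|d| + 1 by apply: ltr_wpDl => //; apply: mulr_ge0.
have [d1 d10 hd1] := unif_p (fun t0 ht0 => Hp_cont hC1 p ht0) (divr_gt0 e0 nd).
have nd' : 0 < `|d| + 1 by apply: ltr_wpDl.
exists (d1 / (`|d| + 1)); first by rewrite divr_gt0.
move=> tau s ht /andP[s0 sd].
have [c [/andP[c0 cs] eq]] := mvt_pt p d ht s0.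
rewrite eq -mulrBr -dotvBl normrM gtr0_norm // mulrC ler_wpM2r ?(ltW s0) //.
apply: (le_trans (dotv_le _ _)).
have hc : `|p - (p + c *: d)| < d1.
  rewrite opprD addNKr normrN normrZ gtr0_norm //.
  have : c < d1 / (`|d| + 1) by apply: lt_trans sd.
  rewrite ltr_pdivlMr // => h; apply: le_lt_trans h.
  by rewrite mulrDr mulr1 lerDl ltW.
have := hd1 tau _ ht hc; rewrite distrC => hb.
have : n%:R * (`|Hp tau (p + c *: d) - Hp tau p| * `|d|) <=
       n%:R * (e / (n%:R * `|d| + 1) * `|d|).
  by rewrite ler_wpM2l // ler_wpM2r // ltW.
move=> h1; apply: (le_trans h1).
rewrite (_ : n%:R * (e / (n%:R * `|d| + 1) * `|d|) =
   e * (n%:R * `|d| / (n%:R * `|d| + 1))); last by ring.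
apply: ler_piMr; first exact: ltW.
by rewrite ler_pdivrMr // mul1r; lra.
Qed.

End MVTsec.
Section WC.
Variables (R : realType) (A : set R).

Lemma wcD (f g : R -> R) : {within A, continuous f} -> {within A, continuous g} ->
  {within A, continuous (fun t => f t + g t)}.
Proof. by move=> cf cg x; apply: continuousD (cf x) (cg x). Qed.

Lemma wcB (f g : R -> R) : {within A, continuous f} -> {within A, continuous g} ->
  {within A, continuous (fun t => f t - g t)}.
Proof. by move=> cf cg x; apply: continuousB (cf x) (cg x). Qed.

Lemma wcM (f g : R -> R) : {within A, continuous f} -> {within A, continuous g} ->
  {within A, continuous (fun t => f t * g t)}.
Proof. by move=> cf cg x; apply: continuousM (cf x) (cg x). Qed.

Lemma wcC (c : R) : {within A, continuous (fun _ : R => c)}.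
Proof. by move=> x; apply: cst_continuous. Qed.

Lemma wc_sum (I : Type) (r : seq I) (f : I -> R -> R) :
  (forall i, {within A, continuous (f i)}) ->
  {within A, continuous (fun x => \sum_(i <- r) f i x)}.
Proof.
move=> cf; elim: r => [|a s ih].
  rewrite (_ : (fun x => _) = fun _ => 0); first exact: wcC.
  by apply/funext => x; rewrite big_nil.
rewrite (_ : (fun x => _) = fun x => f a x + \sum_(i <- s) f i x); first exact: wcD.
by apply/funext => x; rewrite big_cons.
Qed.

End WC.

Section GInt.
Variables (R : realType).
Notation mu := (@lebesgue_measure R).
Variables (T t1 : R).
Hypothesis ht1 : 0 < t1 <= T.

Lemma Rint_cst (c : R) : Rintegral mu `[0, t1] (fun _ => c) = c * t1.
Proof.
rewrite Rintegral_cst //= lebesgue_measure_itv /=.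
case/andP: ht1 => t0 _; by rewrite lte_fin t0 /= subr0.
Qed.

Lemma Rint_bound (f : R -> R) (c : R) : {within `[0, T], continuous f} ->
  (forall t, 0 <= t <= t1 -> `|f t| <= c) -> `|Rintegral mu `[0, t1] f| <= c * t1.
Proof.
move=> cf hb; case/andP: ht1 => t0 tT.
have i1 := cint cf (lexx 0) tT.
have ic : mu.-integrable `[0, t1] (EFin \o (fun _ : R => c)).
  by apply: (cint (T := T)) => //; apply: wcC.
have icn : mu.-integrable `[0, t1] (EFin \o (fun _ : R => - c)).
  by apply: (cint (T := T)) => //; apply: wcC.
rewrite ler_norml; apply/andP; split.
  rewrite -mulNr -Rint_cst; apply: le_Rintegral => // t; rewrite /= in_itv /= => ht.
  by have := hb t ht; rewrite ler_norml => /andP[].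
rewrite -Rint_cst; apply: le_Rintegral => // t; rewrite /= in_itv /= => ht.
by have := hb t ht; rewrite ler_norml => /andP[].
Qed.

Lemma Rint_sum (I : eqType) (r : seq I) (f : I -> R -> R) :
  (forall i, {within `[0, T], continuous (f i)}) ->
  Rintegral mu `[0, t1] (fun x => \sum_(i <- r) f i x) =
  \sum_(i <- r) Rintegral mu `[0, t1] (f i).
Proof.
move=> cf; case/andP: ht1 => t0 tT.
have cs : forall r : seq I, {within `[0, T], continuous (fun x => \sum_(i <- r) f i x)}.
  elim => [|a s ih].
    rewrite (_ : (fun x => _) = fun _ => 0); first exact: wcC.
    by apply/funext => x; rewrite big_nil.
  rewrite (_ : (fun x => _) = fun x => f a x + \sum_(i <- s) f i x); first exact: wcD.
  by apply/funext => x; rewrite big_cons.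
elim: r => [|a s ih].
  rewrite (_ : (fun x => _) = fun _ => 0); last by apply/funext => x; rewrite big_nil.
  by rewrite Rint_cst mul0r big_nil.
rewrite (_ : (fun x => _) = fun x => f a x + \sum_(i <- s) f i x); last first.
  by apply/funext => x; rewrite big_cons.
rewrite big_cons RintegralD //; first by rewrite ih.
- exact: cint (cf a) (lexx 0) tT.
- exact: cint (cs s) (lexx 0) tT.
Qed.

End GInt.
Section Gsec.
Variables (R : realType) (n : nat).
Notation V := 'rV[R]_n.
Notation mu := (@lebesgue_measure R).
Variables (T t1 : R) (H : R -> V -> R) (Hp : R -> V -> V).
Hypothesis hC1 : C1_strip T H Hp.
Hypothesis ht1 : 0 < t1 <= T.
Local Notation G q := (oint 0 t1 (fun tau => H tau q)).

Lemma G_Rint q : G q = Rintegral mu `[0, t1] (fun tau => H tau q).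
Proof. by case/andP: ht1 => t0 _; rewrite /oint (ltW t0). Qed.

Lemma K_tcont p d : {within `[0, T], continuous (fun t => dotv (Hp t p) d)}.
Proof. apply: wc_sum => i; apply: wcM; [exact: (Hp_tcont hC1) | exact: wcC]. Qed.

Lemma dotv_voint (F : R -> V) d : (forall i, {within `[0, T], continuous (fun t => F t 0 i)}) ->
  dotv (voint 0 t1 F) d = Rintegral mu `[0, t1] (fun t => dotv (F t) d).
Proof.
move=> cF; case/andP: ht1 => t0 tT.
rewrite /dotv (Rint_sum ht1); last by move=> i; apply: wcM => //; exact: wcC.
apply: eq_bigr => i _; rewrite mxE /oint (ltW t0) RintegralZr //.
exact: (cint (cF i) (lexx 0) tT).
Qed.

Lemma G_cont p : forall e, 0 < e -> exists2 dl, 0 < dl &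
  forall q, `|p - q| < dl -> `|G p - G q| <= e.
Proof.
move=> e e0; case/andP: ht1 => t0 tT.
have [dl dl0 hdl] := unif_p (fun t0 ht0 => H_cont hC1 p ht0) (divr_gt0 e0 t0).
exists dl => // q hq.
rewrite !G_Rint -RintegralB //; last 2 first.
- exact: (cint (H_tcont (q:=p) hC1) (lexx 0) tT).
- exact: (cint (H_tcont (q:=q) hC1) (lexx 0) tT).
have -> : e = e / t1 * t1 by rewrite divfK // gt_eqF.
apply: (Rint_bound ht1) => //; first by apply: wcB; exact: (H_tcont hC1).
move=> t /andP[ht0 htt]; apply: ltW; apply: hdl => //.
by rewrite ht0 (le_trans htt tT).
Qed.

Lemma G_dir p d : forall e, 0 < e -> exists2 dl, 0 < dl &
  forall s, 0 < s < dl ->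
  `|G (p + s *: d) - G p - s * dotv (voint 0 t1 (fun tau => Hp tau p)) d| <= e * s.
Proof.
move=> e e0; case/andP: ht1 => t0 tT.
have [dl dl0 hdl] := Gdiff_pt hC1 p d (divr_gt0 e0 t0).
exists dl => // s hs.
rewrite dotv_voint; last by move=> i; exact: (Hp_tcont hC1).
rewrite !G_Rint -RintegralZl //; last exact: (cint (K_tcont (p:=p) (d:=d)) (lexx 0) tT).
rewrite -RintegralB //; last 2 first.
- exact: (cint (H_tcont (q := p + s *: d) hC1) (lexx 0) tT).
- exact: (cint (H_tcont (q := p) hC1) (lexx 0) tT).
rewrite -RintegralB //; last 2 first.
- by apply: (cint (T := T)) => //; apply: wcB; exact: (H_tcont hC1).
- by apply: (cint (T := T)) => //; apply: wcM; [exact: wcC | exact: K_tcont].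
have -> : e * s = e / t1 * s * t1 by rewrite mulrAC divfK // gt_eqF.
apply: (Rint_bound ht1) => //.
  apply: wcB; first by apply: wcB; exact: (H_tcont hC1).
  by apply: wcM; [exact: wcC | exact: K_tcont].
move=> t /andP[ht0 htt]; apply: hdl => //.
by rewrite ht0 (le_trans htt tT).
Qed.

End Gsec.
Section Bnd.
Variables (R : realType) (n : nat).
Notation V := 'rV[R]_n.
Variable sigma : V -> R.
Local Notation S := (fconj (fun p => (sigma p)%:E)).

Lemma norm_ev (i : 'I_n) : `|ev R i| <= 1.
Proof.
apply: norm_le_entries => // j; rewrite mxE.
by case: (j == i); rewrite ?normr1 ?normr0.
Qed.

Lemma S_bound : lipschitz_fun sigma -> exists L : R,
  forall q, (S q < +oo)%E -> forall i, `|q 0 i| <= L.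
Proof.
move=> [L hL]; exists `|L| => q hq i.
have [s Es] := S_fin hq.
rewrite leNgt; apply/negP => hlt.
set a := `|q 0 i| - `|L|.
have a0 : 0 < a by rewrite /a subr_gt0.
set k := (`|s + sigma 0| + 1) / a.
have k0 : 0 < k by rewrite divr_gt0 // ltr_wpDl.
have ka : k * a = `|s + sigma 0| + 1 by rewrite divfK // gt_eqF.
set w := k *: (Num.sg (q 0 i) *: ev R i).
have dq : dotv q w = k * `|q 0 i|.
  by rewrite /w !dotvZr dotv_ev -normrEsg.
have nw : `|w| <= k.
  rewrite /w normrZ gtr0_norm //; apply: ler_piMr; first exact: ltW.
  rewrite normrZ normr_sg; have := norm_ev i.
  by case: (q 0 i != 0) => h; rewrite ?mul1r ?mul0r.
have hs := S_ge sigma q w; rewrite Es lee_fin in hs.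
have hl := hL w 0; rewrite subr0 in hl.
have hl2 : `|L| * `|w| <= `|L| * k.
  exact: (ler_wpM2l (normr_ge0 L) nw).
have hl3 : L * `|w| <= `|L| * `|w|.
  exact: (ler_wpM2r (normr_ge0 w) (ler_norm L)).
have := ler_norm (s + sigma 0).
move: hl; rewrite ler_norml => /andP[_ hl].
move: ka; rewrite /a mulrBr => ka.
lra.
Qed.

End Bnd.
Section Clus.
Variables (R : realType) (n : nat).
Notation V := 'rV[R]_n.

Lemma cluster_ex (Fz : V -> \bar R) (M L : R) :
  (forall e, 0 < e -> exists q, ((M - e)%:E < Fz q)%E) ->
  (forall q, ((M - 1)%:E < Fz q)%E -> forall i, `|q 0 i| <= L) ->
  exists p, forall e r, 0 < e -> 0 < r -> exists q, `|p - q| < r /\ ((M - e)%:E < Fz q)%E.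
Proof.
move=> happ hbd.
pose B := [set v : V | forall i, `[- L, L]%classic (v ord0 i)].
have cB : compact B.
  by apply: (@rV_compact R n (fun=> `[- L, L]%classic)) => i; apply: segment_compact.
pose Fl := filter_from [set e : R | 0 < e] (fun e => [set q | ((M - e)%:E < Fz q)%E]).
have FF : Filter Fl.
  apply: filter_from_filter; first by exists (1 : R) => /=; exact: ltr01.
  move=> i j i0 j0; exists (Num.min i j); first by rewrite /= lt_min i0 j0.
  move=> q /= hq; split => /=.
    by apply: (le_lt_trans _ hq); rewrite lee_fin lerD2l lerN2 ge_min lexx.
  by apply: (le_lt_trans _ hq); rewrite lee_fin lerD2l lerN2 ge_min lexx orbT.
have PF : ProperFilter Fl.
  apply: filter_from_proper => e e0; have [q hq] := happ e e0; by exists q.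
have FB : Fl B.
  exists (1 : R); first exact: ltr01.
  move=> q /= hq i; rewrite /= in_itv /= -ler_norml; exact: hbd hq i.
have [p [_ cp]] := cB Fl PF FB.
exists p => e r e0 r0.
have FA : Fl [set q | ((M - e)%:E < Fz q)%E] by exists e.
have Nb : nbhs p (ball p r) by apply: nbhsx_ballx.
have [q [hq1 hq2]] := cp _ _ FA Nb.
by exists q; split => //; move: hq2; rewrite -ball_normE.
Qed.

End Clus.
Section Part1.
Variables (R : realType) (n : nat).
Notation V := 'rV[R]_n.
Variables (T t1 : R) (H : R -> V -> R) (Hp : R -> V -> V) (sigma : V -> R)
  (Dsigma : V -> V) (omega : V -> R) (Domega : V -> V).
Hypotheses (hC1 : C1_strip T H Hp) (ht1 : 0 < t1 <= T)
  (hsg : C1_grad sigma Dsigma) (cvx : convex_fun sigma) (lip : lipschitz_fun sigma)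
  (hom : forall x, hopf sigma H t1 x = (omega x)%:E) (hw : C1_grad omega Domega).
Local Notation S := (fconj (fun p => (sigma p)%:E)).
Local Notation G q := (oint 0 t1 (fun tau => H tau q)).
Variable z : V.
Local Notation Fz q := ((dotv z q)%:E - S q - (G q)%:E)%E.

Lemma Fz_fin q c : (c%:E < Fz q)%E -> exists s, S q = s%:E /\ c < dotv z q - s - G q.
Proof.
case Es : (S q) => [s| |] //; last by have := S_ge sigma q 0; rewrite Es.
by rewrite -!EFinB lte_fin => h; exists s.
Qed.

Lemma approx e : 0 < e -> exists q, ((omega z - e)%:E < Fz q)%E.
Proof.
move=> e0.
have : ((omega z - e)%:E < ereal_sup [set Fz q | q in [set: V]])%E.
  by rewrite -hopfE hom lte_fin; lra.
by move/ereal_sup_gt => [_ [q _ <-] h]; exists q.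
Qed.

Lemma exists_p : exists p, forall e r, 0 < e -> 0 < r ->
  exists q, `|p - q| < r /\ ((omega z - e)%:E < Fz q)%E.
Proof.
have [L hL] := S_bound lip.
apply: (cluster_ex (L := L) approx) => q /Fz_fin [s [Es _]]; apply: hL.
by rewrite Es ltry.
Qed.

Variable p : V.
Hypothesis hp : forall e r, 0 < e -> 0 < r ->
  exists q, `|p - q| < r /\ ((omega z - e)%:E < Fz q)%E.

Lemma p_omega : p = Domega z.
Proof.
apply: (grad_unique (hw.1 z)) => w.
apply: le_eps => e0 e00.
set e := e0 / 2.
have e0' : 0 < e by rewrite divr_gt0.
set c := n%:R * `|w - z| + 1.
have c0 : 0 < c by rewrite /c ltr_wpDl // mulr_ge0.
have [q [hpq hq]] := hp e0' (divr_gt0 e0' c0).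
have [s [Es hs]] := Fz_fin hq.
have := hopf_ge hom w q; rewrite Es -!EFinB lee_fin => hw2.
have hd := dotv_le (w - z) (q - p).
have hn : `|q - p| <= e / c by rewrite distrC ltW.
have h3 : n%:R * (`|w - z| * `|q - p|) <= n%:R * (`|w - z| * (e / c)).
  by apply: ler_wpM2l => //; apply: ler_wpM2l.
have h4 : n%:R * (`|w - z| * (e / c)) <= e.
  rewrite mulrA (_ : n%:R * `|w - z| = c - 1); last by rewrite /c addrK.
  rewrite mulrBl mul1r mulrCA divff ?gt_eqF // mulr1; rewrite lerBlDr lerDl.
  by rewrite divr_ge0 // ltW.
have e1 : dotv w q - dotv z q = dotv (w - z) p + dotv (w - z) (q - p).
  by rewrite -dotvDr [p + _]addrC subrK dotvBl.
have e2 : dotv p (w - z) = dotv (w - z) p by rewrite dotvC.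
move: hd; rewrite ler_norml => /andP[hd1 hd2].
rewrite /e in hs hn h3 h4 e0'; lra.
Qed.

Lemma sigma_lb w : dotv w p + G p + omega z - dotv z p <= sigma w.
Proof.
apply: le_eps => e0 e00.
set e := e0 / 3.
have e0' : 0 < e by rewrite divr_gt0.
have [dG dG0 hG] := G_cont hC1 ht1 p e0'.
set c := n%:R * `|z - w| + 1.
have c0 : 0 < c by rewrite /c ltr_wpDl // mulr_ge0.
have r0 : 0 < Num.min dG (e / c) by rewrite lt_min dG0 divr_gt0.
have [q [hpq hq]] := hp e0' r0.
have [s [Es hs]] := Fz_fin hq.
have hS := S_ge sigma q w; rewrite Es lee_fin in hS.
move: hpq; rewrite lt_min => /andP[hq1 hq2].
have hGq := hG q hq1.
have hd := dotv_le (z - w) (q - p).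
have hn : `|q - p| <= e / c by rewrite distrC ltW.
have h3 : n%:R * (`|z - w| * `|q - p|) <= n%:R * (`|z - w| * (e / c)).
  by apply: ler_wpM2l => //; apply: ler_wpM2l.
have h4 : n%:R * (`|z - w| * (e / c)) <= e.
  rewrite mulrA (_ : n%:R * `|z - w| = c - 1); last by rewrite /c addrK.
  rewrite mulrBl mul1r mulrCA divff ?gt_eqF // mulr1; rewrite lerBlDr lerDl.
  by rewrite divr_ge0 // ltW.
have e1 : dotv z q - dotv q w = dotv (z - w) p + dotv (z - w) (q - p).
  by rewrite -dotvDr [p + _]addrC subrK dotvBl (dotvC q w).
have e2 : dotv z p - dotv w p = dotv (z - w) p by rewrite dotvBl.
move: hd hGq; rewrite !ler_norml => /andP[hd1 hd2] /andP[hg1 hg2].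
rewrite /e in hs hn h3 h4 e0' hg1 hg2; lra.
Qed.

Lemma S_lb q : ((dotv z q - G q - omega z)%:E <= S q)%E.
Proof.
have := hopf_ge hom z q.
case Es : (S q) => [s| |].
- by rewrite -!EFinB !lee_fin => h; lra.
- by rewrite leey.
- by have := S_ge sigma q 0; rewrite Es.
Qed.

Lemma Sp_val : S p = (dotv z p - G p - omega z)%:E.
Proof.
apply/le_anti/andP; split; last exact: S_lb.
apply: S_le => w; have := sigma_lb w; rewrite dotvC; lra.
Qed.

Definition yp := z - voint 0 t1 (fun tau => Hp tau p).

Lemma subgradS q sq : S q = sq%:E ->
  dotv yp (q - p) <= sq - (dotv z p - G p - omega z).
Proof.
move=> Eq; set sp := dotv z p - G p - omega z.
set d := q - p.
set D := dotv (voint 0 t1 (fun tau => Hp tau p)) d.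
have -> : dotv yp d = dotv z d - D by rewrite /yp dotvBl.
have Sp := Sp_val.
apply: le_eps => e e0.
have [dl dl0 hdl] := G_dir hC1 ht1 p d e0.
set s := Num.min (dl / 2) 1.
have s0 : 0 < s by rewrite /s lt_min ltr01 andbT divr_gt0.
have s1 : s <= 1 by rewrite ge_min lexx orbT.
have sdl : s < dl by apply: (le_lt_trans (y := dl / 2)); [rewrite ge_min lexx | lra].
have hG := hdl s; rewrite s0 sdl in hG; have {hG} := hG isT.
rewrite ler_norml -/D => /andP[_ hG].
have conv : (S (p + s *: d) <= ((1 - s) * sp + s * sq)%:E)%E.
  apply: S_le => w.
  have a1 := S_ge sigma p w; rewrite Sp lee_fin -/sp in a1.
  have a2 := S_ge sigma q w; rewrite Eq lee_fin in a2.
  have b1 : (1 - s) * (dotv p w - sigma w) <= (1 - s) * sp.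
    by apply: ler_wpM2l => //; lra.
  have b2 : s * (dotv q w - sigma w) <= s * sq by apply: ler_wpM2l => //; exact: ltW.
  have e1 : dotv (p + s *: d) w = dotv p w + s * dotv q w - s * dotv p w.
    by rewrite dotvDl dotvZl /d dotvBl mulrBr addrA.
  rewrite e1; move: b1 b2; rewrite !mulrBl !mulrBr !mul1r; lra.
have low := S_lb (p + s *: d).
have := le_trans low conv; rewrite lee_fin.
rewrite dotvDr dotvZr => h.
have : s * (dotv z d - D - e) <= s * (sq - sp).
  rewrite !mulrBr; move: h; rewrite /sp !mulrBl !mulrBr !mul1r; lra.
by rewrite ler_pM2l //; lra.
Qed.

Lemma p_sigma : p = Dsigma yp.
Proof.
have cg := convex_grad cvx (hsg.1 yp).
have Sg : (S (Dsigma yp) <= (dotv (Dsigma yp) yp - sigma yp)%:E)%E.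
  apply: S_le => w; have := cg w; rewrite dotvBr; lra.
have [sg Esg] : exists sg, S (Dsigma yp) = sg%:E.
  by apply: S_fin; apply: (le_lt_trans Sg); rewrite ltry.
have hs := subgradS Esg.
rewrite Esg lee_fin in Sg.
apply: (grad_unique (hsg.1 yp)) => w.
have a1 := S_ge sigma p w; rewrite Sp_val lee_fin in a1.
have E1 : dotv yp (Dsigma yp - p) = dotv (Dsigma yp) yp - dotv yp p.
  by rewrite dotvBr (dotvC yp (Dsigma yp)).
have E2 : dotv p (w - yp) = dotv p w - dotv yp p by rewrite dotvBr (dotvC p yp).
lra.
Qed.

End Part1.
Theorem theorem4p3 (R : realType) (n : nat) (T t1 : R)
  (H : R -> 'rV[R]_n -> R) (Hp : R -> 'rV[R]_n -> 'rV[R]_n)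
  (sigma : 'rV[R]_n -> R) (Dsigma : 'rV[R]_n -> 'rV[R]_n)
  (omega : 'rV[R]_n -> R) (Domega : 'rV[R]_n -> 'rV[R]_n) :
  0 < T ->
  C1_strip T H Hp ->
  C1_grad sigma Dsigma -> convex_fun sigma -> lipschitz_fun sigma ->
  0 < t1 < T ->
  (forall x, hopf sigma H t1 x = (omega x)%:E) ->
  C1_grad omega Domega ->
  (* (1) *)
  (forall z : 'rV[R]_n,
     let y := z - voint 0 t1 (fun tau => Hp tau (Domega z)) in
     forall t, 0 <= t <= T ->
       char_omega Hp Domega t1 z t = char_sigma Hp Dsigma y t) /\
  (* (2) *)
  (forall y : 'rV[R]_n,
     let x1 := char_sigma Hp Dsigma y t1 in
     ell sigma H t1 x1 (Dsigma y) ->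
     forall t, t1 <= t <= T ->
       char_sigma Hp Dsigma y t = char_omega Hp Domega t1 x1 t).
Proof.
move=> T0 hC1 hsg cvx lip /andP[t10 t1T] hom hw.
have ht1 : 0 < t1 <= T by rewrite t10 ltW.
split; last by apply: (part2 hC1) => //; rewrite t10 t1T.
move=> z y t ht; rewrite /y.
have [p hp] := exists_p lip hom z.
have e1 := p_omega hom hw hp.
have e2 := p_sigma hC1 ht1 hsg cvx hom hp.
rewrite /char_omega /char_sigma -e1.
have e3 : Dsigma (z - voint 0 t1 (fun tau => Hp tau p)) = p := esym e2.
rewrite e3.
rewrite (@voint_chasles _ _ _ T 0 t1 t); last 4 first.
- by move=> i; apply: (Hp_tcont hC1).
- by rewrite lexx ltW.
- by rewrite (ltW t10) (ltW t1T).
- exact: ht.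
by rewrite addrA subrK.
Qed.
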